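(* Let $\circ$ be an alternative operation on $V=\mathbb{F}_2^s$ such that $\dim W_\circ=s-3$. Then $\dim U_\circ\in\{2,3\}$.
   Context: An alternative operation on $V$ is defined from an elementary abelian $2$-subgroup $T<\mathrm{AGL}(V,+)$ acting regularly on $V$: with $\tau_a$ the unique element of $T$ sending $0$ to $a$ (postfix notation), $a\circ b:=a\tau_b$. It is assumed that the xor-translations $x\mapsto x+a$ lie in the normaliser of $T$ in $\mathrm{Sym}(V)$. The weak key space is $W_\circ=\{k: x\circ k=x+k\ \forall x\in V\}$; the product is $a\cdot b:=a+b+a\circ b$ and the error space is $U_\circ=\{a\cdot b: a,b\in V\}$. *)

(* Defs.v *)
From HB Require Import structures.
From mathcomp Require Import all_boot all_order all_algebra all_fingroup all_field.
Set Implicit Arguments. Unset Strict Implicit. Unset Printing Implicit Defensive.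
Import GRing.Theory.
Local Open Scope ring_scope.

Notation V s := 'rV['F_2]_s.

Definition transl_fun s (a : V s) (x : V s) : V s := x + a.
Lemma transl_inj s (a : V s) : injective (transl_fun a).
Proof. by move=> x y; rewrite /transl_fun => /addIr. Qed.
Definition transl s (a : V s) : {perm V s} := perm (@transl_inj s a).

Definition is_affine s (t : {perm V s}) : Prop :=
  exists (A : 'M['F_2]_s) (b : V s), A \in unitmx /\ forall x, t x = x *m A + b.

Definition translation_group s (T : {group {perm V s}}) : Prop :=
  [/\ (forall t, t \in T -> is_affine t),
      abelian T,
      (forall t, t \in T -> t ^+ 2 = 1)%g,
      (forall x y : V s, exists! t, t \in T /\ t x = y) &
      (forall a : V s, transl a \in 'N(T)%g)].

Definition tau s (T : {group {perm V s}}) (a : V s) : {perm V s} :=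
  odflt 1%g [pick t in T | t 0 == a].

(* a o b := a tau_b (postfix notation: tau_b applied to a) *)
Definition circ s (T : {group {perm V s}}) (a b : V s) : V s := tau T b a.

Definition Wcirc s (T : {group {perm V s}}) : {set V s} :=
  [set k | [forall x, circ T x k == x + k]].

Definition dotc s (T : {group {perm V s}}) (a b : V s) : V s := a + b + circ T a b.

Definition Ucirc s (T : {group {perm V s}}) : {set V s} :=
  [set dotc T ab.1 ab.2 | ab in [set: V s * V s]].

Definition dimset s (A : {set V s}) : nat := \dim <<enum A>>%VS.

(* Main.v *)
Require Import Defs.
From mathcomp Require Import all_boot all_order all_algebra all_fingroup all_field.
Import GRing.Theory.
Local Open Scope ring_scope.

Lemma F2cases (c : 'F_2) : c = 0 \/ c = 1.
Proof. by case: c => [[|[|n]]] // H; [left|right]; apply: val_inj. Qed.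

Ltac f2solve :=
  apply/rowP; let i := fresh "i" in intro i; rewrite !mxE;
  repeat match goal with |- context [@fun_of_matrix ?R ?m ?n ?v ?r i] =>
    let E := fresh "E" in
    case: (F2cases (@fun_of_matrix R m n v r i)) => E; rewrite E; clear E end;
  by apply: val_inj.

Lemma F2addrr s (v : 'rV['F_2]_s) : v + v = 0.
Proof. f2solve. Qed.

Section LA.
Variables (s : nat) (p : 'rV['F_2]_s -> 'rV['F_2]_s -> 'rV['F_2]_s) (W : {set 'rV['F_2]_s}).
Hypothesis pD : forall a a' b, p (a + a') b = p a b + p a' b.
Hypothesis pC : forall a b, p a b = p b a.
Hypothesis pA : forall a, p a a = 0.
Hypothesis pN : forall x a b, p x (p a b) = 0.
Hypothesis HW : forall k, k \in W <-> forall x, p x k = 0.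
Hypothesis hs : (3 <= s)%N.
Hypothesis hdim : dimset W = (s - 3)%N.

Lemma pDr a b b' : p a (b + b') = p a b + p a b'.
Proof. by rewrite pC pD !(pC a). Qed.
Lemma p0l b : p 0 b = 0.
Proof.
have h := pD 0 0 b; rewrite addr0 in h.
have : p 0 b + p 0 b = p 0 b + 0 by rewrite addr0 -h.
by move/addrI.
Qed.
Lemma p0r b : p b 0 = 0.
Proof. by rewrite pC p0l. Qed.
Lemma pZl c a b : p (c *: a) b = c *: p a b.
Proof. by case: (F2cases c) => ->; rewrite ?scale0r ?scale1r ?p0l. Qed.
Lemma pZr c a b : p a (c *: b) = c *: p a b.
Proof. by rewrite pC pZl pC. Qed.
Lemma pWl w x : w \in W -> p w x = 0.
Proof. by move/HW => /(_ x); rewrite pC. Qed.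
Lemma pWr w x : w \in W -> p x w = 0.
Proof. by move/HW. Qed.

Let Wsp := <<enum W>>%VS.

Lemma memWsp x : (x \in Wsp) = (x \in W).
Proof.
apply/idP/idP; last by move=> xW; apply: memv_span; rewrite mem_enum.
move=> xs; apply/HW => y.
have := coord_span (X := in_tuple (enum W)) xs => ->.
apply: (big_ind (fun v => p y v = 0)); first exact: p0r.
  by move=> u v Hu Hv; rewrite pDr Hu Hv addr0.
move=> i _; rewrite pZr pWr ?scaler0 //.
by rewrite -mem_enum; apply: mem_nth; exact: ltn_ord.
Qed.

Let Wc := (Wsp^C)%VS.

Lemma dimWc : \dim Wc = 3%N.
Proof.
rewrite /Wc dimv_compl dimvf dim_matrix mul1r.
have -> : \dim Wsp = (s - 3)%N := hdim.
by rewrite subKn.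
Qed.

Lemma final : dimset [set p ab.1 ab.2 | ab in [set: 'rV['F_2]_s * 'rV['F_2]_s]] \in [:: 2%N; 3%N].
Proof.
have [e1 [e2 [e3 [spE fr]]]] : exists e1 e2 e3, <<[:: e1; e2; e3]>>%VS = Wc /\ free [:: e1; e2; e3].
  have := vbasisP Wc; have := size_tuple (vbasis Wc).
  case: (vbasis Wc) => X /= _; rewrite dimWc.
  case: X => [|e1 [|e2 [|e3 [|]]]] // _ /andP[/eqP sp fr].
  by exists e1, e2, e3.
have eWc : forall c1 c2 c3, c1 *: e1 + c2 *: e2 + c3 *: e3 \in Wc.
  move=> c1 c2 c3; rewrite -spE.
  by apply: memvD; [apply: memvD|]; apply: memvZ; apply: memv_span; rewrite !inE eqxx ?orbT.
have decWc : forall y, y \in Wc -> exists c1 c2 c3, y = c1 *: e1 + c2 *: e2 + c3 *: e3.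
  move=> y; rewrite -spE !span_cons span_nil addv0.
  move=> /memv_addP [y1 /vlineP[c1 ->] [z /memv_addP [y2 /vlineP [c2 ->] [y3 /vlineP [c3 ->] ->]] ->]].
  by exists c1, c2, c3; rewrite addrA.
have dec : forall x, exists w c1 c2 c3, w \in W /\ x = w + (c1 *: e1 + c2 *: e2 + c3 *: e3).
  move=> x; have := memvf x; rewrite -(addv_complf Wsp).
  move=> /memv_addP [w wW [y /decWc [c1 [c2 [c3 ->]]] ->]].
  by exists w, c1, c2, c3; split => //; rewrite -memWsp.
have zero : forall y, y \in Wc -> p e1 y = 0 -> p e2 y = 0 -> p e3 y = 0 -> y = 0.
  move=> y yWc h1 h2 h3.
  have yW : y \in W.
    apply/HW => x; have [w [c1 [c2 [c3 [wW ->]]]]] := dec x.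
    by rewrite !pD !pZl h1 h2 h3 pWl // !scaler0 !addr0.
  apply/eqP; rewrite -memv0 -(capv_compl Wsp) memv_cap memWsp yW.
  exact: yWc.
have free3 : forall a b c, a *: e1 + b *: e2 + c *: e3 = 0 -> [/\ a = 0, b = 0 & c = 0].
  move=> a b c E.
  have := freeP (X := [tuple e1; e2; e3]) fr (fun i => nth 0 [:: a; b; c] i).
  rewrite !big_ord_recl big_ord0 /=.
  rewrite addr0 !addrA E => /(_ erefl) h.
  by split; [exact: (h (@Ordinal 3 0 isT)) | exact: (h (@Ordinal 3 1 isT)) | exact: (h (@Ordinal 3 2 isT))].
have inS : forall a b, p a b \in <<enum [set p ab.1 ab.2 | ab in [set: 'rV['F_2]_s * 'rV['F_2]_s]]>>%VS.
  move=> a b; apply: memv_span; rewrite mem_enum; apply/imsetP; by exists (a, b); rewrite ?inE.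
have up : (\dim <<enum [set p ab.1 ab.2 | ab in [set: 'rV['F_2]_s * 'rV['F_2]_s]]>> <= 3)%N.
  apply: leq_trans (dimvS _) (dim_span [:: p e1 e2; p e1 e3; p e2 e3]).
  apply/span_subvP => u; rewrite mem_enum => /imsetP [[a b] _ ->] /=.
  have [w [c1 [c2 [c3 [wW ->]]]]] := dec a.
  have [w' [d1 [d2 [d3 [wW' ->]]]]] := dec b.
  rewrite !pD !pDr !pZl !pZr.
  repeat (apply: memvD || apply: memvZ);
  try (by rewrite pWl // mem0v); try (by rewrite pWr // mem0v);
  try (by rewrite pA mem0v);
  try (by apply: memv_span; rewrite !inE eqxx ?orbT);
  by rewrite pC; apply: memv_span; rewrite !inE eqxx ?orbT.
have lo : (1 < \dim <<enum [set p ab.1 ab.2 | ab in [set: 'rV['F_2]_s * 'rV['F_2]_s]]>>)%N.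
  rewrite ltnNge; apply/negP => le1.
  have [u Usub] : exists u, (<<enum [set p ab.1 ab.2 | ab in [set: 'rV['F_2]_s * 'rV['F_2]_s]]>> <= <[u]>)%VS.
    have := vbasisP <<enum [set p ab.1 ab.2 | ab in [set: 'rV['F_2]_s * 'rV['F_2]_s]]>>%VS.
    have := size_tuple (vbasis <<enum [set p ab.1 ab.2 | ab in [set: 'rV['F_2]_s * 'rV['F_2]_s]]>>%VS).
    case: (vbasis _) => X /= _.
    case: X => [|u [|v X]] /=.
    - by move=> _ /andP [/eqP <- _]; exists 0; rewrite span_nil sub0v.
    - by move=> _ /andP [/eqP <- _]; exists u; rewrite span_cons span_nil addv0 subvv.
    - by move=> sz; move: le1; rewrite -sz.
  have inU : forall a b, p a b \in <[u]>%VS by move=> a b; apply: (subvP Usub); apply: inS.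
  have [al E12] := vlineP _ _ (inU e1 e2).
  have [be E13] := vlineP _ _ (inU e1 e3).
  have [ga E23] := vlineP _ _ (inU e2 e3).
  have := zero _ (eWc ga be al).
  rewrite !pDr !pZr !pA !scaler0 ?add0r ?addr0.
  rewrite (pC e2 e1) (pC e3 e1) (pC e3 e2) E12 E13 E23 !scalerA.
  rewrite (mulrC al be) (mulrC ga al) (mulrC be ga) !F2addrr => /(_ erefl erefl erefl).
  move/free3 => [g0 b0 a0].
  move: E12 E13 E23; rewrite a0 b0 g0 !scale0r => E12 E13 E23.
  have e10 : e1 = 0.
    apply: zero; first by rewrite -spE; apply: memv_span; rewrite inE eqxx.
      by rewrite pA.
      by rewrite pC.
      by rewrite pC.
  have := free3 1 0 0; rewrite e10 !scale0r scaler0 !addr0 => /(_ erefl) [].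
  by move/eqP; rewrite oner_eq0.
rewrite /dimset; move: lo up.
by case: (\dim _) => [|[|[|[|]]]].
Qed.

End LA.

Section G.
Variables (s : nat) (T : {group {perm 'rV['F_2]_s}}).
Hypothesis H : translation_group T.

Lemma tauP b : tau T b \in T /\ tau T b 0 = b.
Proof.
case: H => _ _ _ reg _; rewrite /tau; case: pickP => [t /andP[tT /eqP]|none] //.
exfalso; case: (reg 0 b) => t [[tT t0] _]; move: (none t); by rewrite tT t0 eqxx.
Qed.

Lemma tau_uniq b t : t \in T -> t 0 = b -> t = tau T b.
Proof.
case: H => _ _ _ reg _ tT t0; case: (reg 0 b) => t1 [_ U].
have [tbT tb0] := tauP b.
by rewrite -(U t) // -(U (tau T b)).
Qed.

Lemma tau_add b x y : tau T b (x + y) = tau T b x + tau T b y + b.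
Proof.
case: H => aff _ _ _ _; have [tbT tb0] := tauP b.
case: (aff _ tbT) => A [v [_ E]].
have Ev : v = b by rewrite -tb0 E mul0mx add0r.
rewrite !E Ev mulmxDl; move: (x *m A) (y *m A) => X Y; f2solve.
Qed.

Lemma circC a b : circ T a b = circ T b a.
Proof.
case: H => _ ab _ _ _; have [taT ta0] := tauP a; have [tbT tb0] := tauP b.
rewrite /circ.
have -> : tau T b a = (tau T a * tau T b)%g 0 by rewrite permM ta0.
have -> : tau T a b = (tau T b * tau T a)%g 0 by rewrite permM tb0.
by move/centsP: ab => /(_ _ taT _ tbT) ->.
Qed.

Lemma circ_self b : circ T b b = 0.
Proof.
case: H => _ _ e2 _ _; have [tbT tb0] := tauP b.
rewrite /circ.
have -> : tau T b b = (tau T b * tau T b)%g 0 by rewrite permM tb0.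
by rewrite -expg2 e2 // perm1.
Qed.

Lemma tau_conj a b x : tau T (tau T b a + a) x = tau T b (x + a) + a.
Proof.
case: H => _ _ _ _ nT.
have tiv : forall y, ((transl a)^-1)%g y = y + a.
  move=> y; apply: (perm_inj (s := transl a)); rewrite permKV /transl permE /transl_fun.
  by rewrite -addrA F2addrr addr0.
have [tbT tb0] := tauP b.
have cT : (tau T b ^ transl a)%g \in T by rewrite -(normP (nT a)) memJ_conjg.
have E : forall y, (tau T b ^ transl a)%g y = tau T b (y + a) + a.
  by move=> y; rewrite conjgE !permM tiv /transl permE /transl_fun.
have c0 : (tau T b ^ transl a)%g 0 = tau T b a + a by rewrite E add0r.
by rewrite -(tau_uniq _ _ cT c0) E.
Qed.

End G.

Theorem proposition5 (s : nat) (T : {group {perm 'rV['F_2]_s}}) :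
  translation_group T -> (3 <= s)%N ->
  dimset (Wcirc T) = (s - 3)%N ->
  dimset (Ucirc T) \in [:: 2%N; 3%N].
Proof.
move=> H hs hdim.
have pD : forall a a' b, dotc T (a + a') b = dotc T a b + dotc T a' b.
  move=> a a' b; rewrite /dotc /circ (@tau_add _ _ H); f2solve.
have pC : forall a b, dotc T a b = dotc T b a.
  by move=> a b; rewrite /dotc (@circC _ _ H) (addrC a b).
have pA : forall a, dotc T a a = 0.
  by move=> a; rewrite /dotc (@circ_self _ _ H) F2addrr addr0.
have pN : forall x a b, dotc T x (dotc T a b) = 0.
  move=> x a b.
  have key : forall y, dotc T y (tau T b a + a) = dotc T y b.
    move=> y; rewrite /dotc /circ (@tau_conj _ _ H) (@tau_add _ _ H); f2solve.
  have pab : dotc T a b = (tau T b a + a) + b by rewrite /dotc /circ; f2solve.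
  rewrite pab pC pD !(pC _ x) key; exact: F2addrr.
have HW : forall k, k \in Wcirc T <-> forall x, dotc T x k = 0.
  move=> k; rewrite inE; split.
    by move/forallP => h x; move/eqP: (h x) => e; rewrite /dotc e F2addrr.
  move=> h; apply/forallP => x; apply/eqP; have := h x; rewrite /dotc => e.
  have : x + k + circ T x k + circ T x k = circ T x k by rewrite e add0r.
  by rewrite -addrA F2addrr addr0.
exact: (@final _ _ _ pD pC pA HW hs hdim).
Qed.
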